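(* Let $\mathcal U$ be a finite set of size $n$, $\Pi$ an orthogonal projector on $L_2(\mathcal U)$, and $\mathcal D$ a finitely supported probability distribution over $L_2(\mathcal U)$. For $u\in\mathcal U$ let $\delta_u$ be the function with $\delta_u(u)=n$ and $\delta_u(v)=0$ for $v\neq u$. Then $$\mathbb{E}_{f\sim\mathcal D}\|\Pi f\|_4^4\le\left(\mathbb{E}_{f,f'\sim\mathcal D}\langle f,\Pi f'\rangle^4\right)^{1/2}\left(\mathbb{E}_{u\in\mathcal U}\|\Pi\delta_u\|_4^4\right)^{1/2},$$ where $f,f'$ are independent samples from $\mathcal D$ and $u$ is uniform on $\mathcal U$.
   Context: $L_2(\mathcal U)$ is the space of functions $\mathcal U\to\mathbb{R}$ with the uniform (expectation) measure: $\langle f,g\rangle=\mathbb{E}_{u\in\mathcal U}f(u)g(u)$, $\|f\|_p=(\mathbb{E}_{u}|f(u)|^p)^{1/p}$; orthogonality refers to this inner product. *)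

(* Defs.v *)
From HB Require Import structures.
From mathcomp Require Import all_boot all_order all_algebra.
Set Implicit Arguments. Unset Strict Implicit. Unset Printing Implicit Defensive.
Import Order.TTheory GRing.Theory Num.Theory.
Local Open Scope ring_scope.

Definition Eu (R : rcfType) (U : finType) (g : U -> R) : R :=
  (\sum_(u : U) g u) / (#|U|%:R).

Definition inner (R : rcfType) (U : finType) (f g : {ffun U -> R}) : R :=
  Eu (fun u => f u * g u).

Definition norm4pow4 (R : rcfType) (U : finType) (f : {ffun U -> R}) : R :=
  Eu (fun u => `|f u| ^+ 4).

Definition delta (R : rcfType) (U : finType) (u : U) : {ffun U -> R} :=
  [ffun v => if v == u then (#|U|%:R : R) else 0].

(* Main.v *)
Require Import Defs.
From HB Require Import structures.
From mathcomp Require Import all_boot all_order all_algebra.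
From mathcomp Require Import ring lra.
Import Order.TTheory GRing.Theory Num.Theory.
Local Open Scope ring_scope.

Definition X4 {R : rcfType} {U : finType} (g : U -> R) (t : ((U * U) * (U * U))%type) : R :=
  g t.1.1 * g t.1.2 * g t.2.1 * g t.2.2.

Lemma sum_prod (R : rcfType) (A B : finType) (f : A -> R) (h : B -> R) :
  (\sum_x f x) * (\sum_y h y) = \sum_(t : (A * B)%type) f t.1 * h t.2.
Proof. by rewrite big_distrlr /= pair_big. Qed.

Lemma sum4 (R : rcfType) (U : finType) (g : U -> R) :
  \sum_t X4 g t = (\sum_x g x) ^+ 4.
Proof.
have -> : (\sum_x g x) ^+ 4 = ((\sum_x g x) * (\sum_x g x)) * ((\sum_x g x) * (\sum_x g x)).
  by rewrite !exprS expr0 mulr1 !mulrA.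
rewrite !sum_prod; apply: eq_bigr => t _; by rewrite /X4 !mulrA.
Qed.

Lemma inner4 (R : rcfType) (U : finType) (f g : {ffun U -> R}) :
  inner f g ^+ 4 = (\sum_t X4 f t * X4 g t) / (#|U|%:R) ^+ 4.
Proof.
rewrite /inner /Eu expr_div_n -sum4; congr (_ / _); apply: eq_bigr => t _.
by rewrite /X4; ring.
Qed.

Lemma exch3 (R : rcfType) (I J K : finType) (f : I -> J -> K -> R) :
  \sum_i \sum_j \sum_k f i j k = \sum_k \sum_i \sum_j f i j k.
Proof.
under eq_bigr do rewrite exchange_big.
by rewrite exchange_big.
Qed.
Lemma cs_sum (R : rcfType) (T : finType) (a b : T -> R) :
  (\sum_t a t * b t) ^+ 2 <= (\sum_t a t ^+ 2) * (\sum_t b t ^+ 2).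
Proof.
have H : 0 <= \sum_s \sum_t (a s * b t - a t * b s) ^+ 2.
  by apply: sumr_ge0 => s _; apply: sumr_ge0 => t _; exact: sqr_ge0.
have E : \sum_s \sum_t (a s * b t - a t * b s) ^+ 2
   = \sum_s \sum_t (a s ^+ 2 * b t ^+ 2) + \sum_s \sum_t (a t ^+ 2 * b s ^+ 2)
     - 2 * (\sum_s \sum_t (a s * b s) * (a t * b t)).
  rewrite mulr_sumr -!big_split -sumrB; apply: eq_bigr => s _.
  rewrite mulr_sumr -!big_split -sumrB; apply: eq_bigr => t _ /=.
  by rewrite mulr2n; ring.
have E2 : \sum_s \sum_t (a t ^+ 2 * b s ^+ 2) = \sum_s \sum_t (a s ^+ 2 * b t ^+ 2).
  by rewrite exchange_big.
rewrite E E2 -big_distrlr /= in H.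
have -> : (\sum_t a t * b t) ^+ 2 = \sum_s \sum_t (a s * b s) * (a t * b t).
  by rewrite expr2 big_distrlr.
lra.
Qed.

Theorem lemma4p6 (R : rcfType) (U : finType)
  (Pi : {ffun U -> R} -> {ffun U -> R})
  (I : finType) (p : I -> R) (F : I -> {ffun U -> R}) :
  (0 < #|U|)%N ->
  (forall (a : R) (f g : {ffun U -> R}),
     Pi [ffun x => a * f x + g x] = [ffun x => a * Pi f x + Pi g x]) ->
  (forall f, Pi (Pi f) = Pi f) ->
  (forall f g, inner (Pi f) g = inner f (Pi g)) ->
  (forall i, 0 <= p i) -> \sum_(i : I) p i = 1 ->
  \sum_(i : I) p i * norm4pow4 (Pi (F i))
    <= Num.sqrt (\sum_(i : I) \sum_(j : I) p i * p j * (inner (F i) (Pi (F j))) ^+ 4)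
       * Num.sqrt (Eu (fun u : U => norm4pow4 (Pi (delta R u)))).
Proof.
move=> hU _ hid hadj _ _.
set N : R := #|U|%:R.
have hN : N != 0 by rewrite pnatr_eq0 -lt0n.
have hN0 : 0 < N by rewrite ltr0n.
have hdelta : forall (g : {ffun U -> R}) u, inner g (delta R u) = g u.
  move=> g u; rewrite /inner /Eu (bigD1 u) //= big1 ?addr0.
    by rewrite ffunE eqxx mulfK.
  by move=> v hv; rewrite ffunE (negbTE hv) mulr0.
have innerC : forall f g : {ffun U -> R}, inner f g = inner g f.
  by move=> f g; rewrite /inner /Eu; congr (_ / _); apply: eq_bigr => v _; rewrite mulrC.
have hev : forall f u, Pi f u = inner (Pi f) (Pi (delta R u)).
  by move=> f u; rewrite -hadj hid hdelta.
have hk : forall u v, inner (Pi (delta R u)) (Pi (delta R v)) = Pi (delta R v) u.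
  by move=> u v; rewrite hadj hid innerC hdelta.
have hF : forall i j, inner (F i) (Pi (F j)) = inner (Pi (F i)) (Pi (F j)).
  by move=> i j; rewrite hadj hid.
have n4 : forall x : R, `|x| ^+ 4 = x ^+ 4.
  move=> x; rewrite -normrX ger0_norm //.
  by rewrite (_ : 4 = 2 * 2)%N // exprM sqr_ge0.
pose A t := \sum_i p i * X4 (Pi (F i)) t.
pose B t := \sum_u X4 (Pi (delta R u)) t.
have L1 : \sum_i p i * norm4pow4 (Pi (F i)) = (\sum_t A t * B t) / N ^+ 5.
  have -> : \sum_t A t * B t = \sum_i \sum_u \sum_t p i * X4 (Pi (F i)) t * X4 (Pi (delta R u)) t.
    by rewrite exch3; apply: eq_bigr => t _; rewrite /A /B big_distrlr.
  rewrite mulr_suml; apply: eq_bigr => i _.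
  rewrite /norm4pow4 /Eu.
  have E : forall u, `|Pi (F i) u| ^+ 4 = (\sum_t X4 (Pi (F i)) t * X4 (Pi (delta R u)) t) / N ^+ 4.
    by move=> u; rewrite n4 hev inner4.
  under eq_bigr do rewrite E.
  rewrite -mulr_suml.
  have -> : \sum_u \sum_t p i * X4 (Pi (F i)) t * X4 (Pi (delta R u)) t
     = p i * \sum_u \sum_t X4 (Pi (F i)) t * X4 (Pi (delta R u)) t.
    rewrite mulr_sumr; apply: eq_bigr => u _; rewrite mulr_sumr; apply: eq_bigr => t _.
    by rewrite mulrA.
  by field.
have L2 : \sum_i \sum_j p i * p j * (inner (F i) (Pi (F j))) ^+ 4
          = (\sum_t A t ^+ 2) / N ^+ 4.
  have -> : \sum_t A t ^+ 2 = \sum_i \sum_j \sum_t (p i * X4 (Pi (F i)) t) * (p j * X4 (Pi (F j)) t).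
    by rewrite exch3; apply: eq_bigr => t _; rewrite /A expr2 big_distrlr.
  rewrite mulr_suml; apply: eq_bigr => i _.
  rewrite mulr_suml; apply: eq_bigr => j _.
  rewrite hF inner4 mulrA; congr (_ * _).
  rewrite mulr_sumr; apply: eq_bigr => t _; ring.
have L3 : Eu (fun u : U => norm4pow4 (Pi (delta R u))) = (\sum_t B t ^+ 2) / N ^+ 6.
  have -> : \sum_t B t ^+ 2 = \sum_v \sum_u \sum_t X4 (Pi (delta R u)) t * X4 (Pi (delta R v)) t.
    rewrite exch3; apply: eq_bigr => t _; rewrite /B expr2 big_distrlr.
    by apply: eq_bigr => v _; apply: eq_bigr => u _; rewrite mulrC.
  rewrite /Eu /norm4pow4.
  have E : forall v, \sum_u `|Pi (delta R v) u| ^+ 4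
       = (\sum_u \sum_t X4 (Pi (delta R u)) t * X4 (Pi (delta R v)) t) / N ^+ 4.
    by move=> v; rewrite mulr_suml; apply: eq_bigr => u _; rewrite n4 -hk inner4.
  rewrite /Eu; under eq_bigr do rewrite E.
  rewrite -!mulr_suml; by field.
rewrite L1 L2 L3.
have sq : forall (x : R) k, 0 <= x -> Num.sqrt (x / N ^+ (k * 2)) = Num.sqrt x / N ^+ k.
  move=> x k hx; rewrite sqrtrM // exprM -exprVn sqrtr_sqr ger0_norm //.
  by rewrite invr_ge0 exprn_ge0 // ltW.
have hSA : 0 <= \sum_t A t ^+ 2 by apply: sumr_ge0 => t _; exact: sqr_ge0.
have hSB : 0 <= \sum_t B t ^+ 2 by apply: sumr_ge0 => t _; exact: sqr_ge0.
rewrite (sq _ 2%N hSA) (sq _ 3%N hSB).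
have -> : Num.sqrt (\sum_t A t ^+ 2) / N ^+ 2 * (Num.sqrt (\sum_t B t ^+ 2) / N ^+ 3)
   = Num.sqrt (\sum_t A t ^+ 2) * Num.sqrt (\sum_t B t ^+ 2) / N ^+ 5.
  by field.
rewrite ler_pM2r ?invr_gt0 ?exprn_gt0 //.
rewrite -sqrtrM // (le_trans (ler_norm _)) // -sqrtr_sqr ler_sqrt ?mulr_ge0 //.
exact: cs_sum.
Qed.
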